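(* Let $\mathcal{A}=M_n(\mathbb{F})$ be endowed with an involution $*$, let $\mathcal{A}^+=\{a:a^*=a\}$, $\mathcal{A}^-=\{a:a^*=-a\}$, and let $u\in\mathcal{A}$ be invertible. Then: (1) if $*$ is the transpose involution and $u^{-1}\mathcal{A}^+u\subseteq\mathcal{A}^+$, then $u^{-1}\mathcal{A}^-u\subseteq\mathcal{A}^-$; (2) if $n=2k$, $*$ is the symplectic involution, and $u^{-1}\mathcal{A}^-u\subseteq\mathcal{A}^-$, then $u^{-1}\mathcal{A}^+u\subseteq\mathcal{A}^+$.
   Context: The symplectic involution on $M_{2k}(\mathbb{F})$ is $\begin{pmatrix}A&B\\C&D\end{pmatrix}^s=\begin{pmatrix}D^t&-B^t\\-C^t&A^t\end{pmatrix}$ for $A,B,C,D\in M_k(\mathbb{F})$. *)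

(* Defs.v *)
From HB Require Import structures.
From mathcomp Require Import all_boot all_order all_algebra.
Set Implicit Arguments. Unset Strict Implicit. Unset Printing Implicit Defensive.
Import GRing.Theory.
Local Open Scope ring_scope.

Definition sympl_inv (F : fieldType) (k : nat) (X : 'M[F]_(k + k)) : 'M[F]_(k + k) :=
  block_mx (drsubmx X)^T (- (ursubmx X)^T) (- (dlsubmx X)^T) (ulsubmx X)^T.

Definition sym_elt (T : zmodType) (star : T -> T) (a : T) : Prop := star a = a.
Definition skew_elt (T : zmodType) (star : T -> T) (a : T) : Prop := star a = - a.

Definition conj_stable (F : fieldType) (n : nat) (S : 'M[F]_n -> Prop)
  (u : 'M[F]_n) : Prop :=
  forall a, S a -> S (invmx u *m a *m u).

(* Main.v *)
Require Import Defs.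
From mathcomp Require Import all_boot all_order all_algebra.
Local Open Scope ring_scope.
Import GRing.Theory.

Section Aux.
Variable F : fieldType.

Lemma key_lem n (u v t t' a : 'M[F]_n) :
  v *m u = 1%:M -> u *m v = 1%:M -> t *m t' = 1%:M -> t' *m t = 1%:M ->
  (t *m a *m t' = v *m a *m u) <-> (u *m t *m a = a *m (u *m t)).
Proof.
move=> Hvu Huv Htt Ht't; split=> H.
  move: (congr1 (fun X => u *m X *m t) H) => /=.
  rewrite !mulmxA Huv mul1mx -(mulmxA _ t' t) Ht't mulmx1 => ->.
  by [].  
move: (congr1 (fun X => v *m X *m t') H) => /=.
rewrite !mulmxA Hvu mul1mx -(mulmxA _ t t') Htt mulmx1 => <-.
by [].
Qed.

Lemma comm_sym_all n (w : 'M[F]_n) :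
  (forall S : 'M_n, S^T = S -> w *m S = S *m w) -> forall a, w *m a = a *m w.
Proof.
case: n w => [|n] w H a; first by apply/matrixP => -[].
have Hd : forall i j : 'I_n.+1, i != j -> w i j = 0.
  move=> i j ij.
  have := H (delta_mx j j) (trmx_delta _ _ _).
  move/matrixP/(_ i j); rewrite !mxE (bigD1 j) //= big1 => [|r rj]; last first.
    by rewrite mxE (negPf rj) /= ?mulr0n ?mulr0.
  rewrite big1 => [|r _]; last by rewrite mxE (negPf ij) /= ?mulr0n ?mul0r.
  by rewrite mxE !eqxx /= mulr1 addr0.
have Hdd : forall i j : 'I_n.+1, w i i = w j j.
  move=> i j; have [->//|ij] := eqVneq i j.
  have := H (delta_mx i j + delta_mx j i).
  rewrite linearD /= !trmx_delta addrC => /(_ erefl).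
  move/matrixP/(_ i j); rewrite !mxE (bigD1 i) //= big1 => [|r ri]; last first.
    by rewrite Hd ?mul0r // eq_sym.
  rewrite (bigD1 j) //= big1 => [|r rj]; last by rewrite (Hd r j rj) mulr0.
  rewrite !mxE !eqxx (negPf ij) eq_sym (negPf ij) /= ?mulr0n !addr0.
  by rewrite mulr1 mul1r.
have -> : w = (w 0 0)%:M.
  apply/matrixP => i j; rewrite !mxE; have [->|ij] := eqVneq i j.
    by rewrite mulr1n (Hdd j 0).
  by rewrite Hd // mulr0n.
by rewrite scalar_mxC.
Qed.

Variable k : nat.
Definition JJ : 'M[F]_(k + k) := block_mx 0 1%:M (- 1%:M) 0.
Definition JJ' : 'M[F]_(k + k) := block_mx 0 (- 1%:M) 1%:M 0.

Lemma JJJJ' : JJ *m JJ' = 1%:M.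
Proof.
rewrite /JJ /JJ' mulmx_block scalar_mx_block.
by rewrite ?mul0mx ?mulmx0 ?mulmx1 ?mulNmx ?mul1mx ?add0r ?addr0 opprK.
Qed.

Lemma JJ'JJ : JJ' *m JJ = 1%:M.
Proof.
rewrite /JJ /JJ' mulmx_block scalar_mx_block.
by rewrite ?mul0mx ?mulmx0 ?mulmx1 ?mulNmx ?mul1mx ?add0r ?addr0 opprK.
Qed.

Lemma JJJJ : JJ *m JJ = - 1%:M.
Proof.
rewrite /JJ mulmx_block scalar_mx_block opp_block_mx.
by rewrite ?mul0mx ?mulmx0 ?mulmx1 ?mulNmx ?mul1mx ?add0r ?addr0 ?oppr0.
Qed.

Lemma trJJ' : JJ'^T = JJ.
Proof. by rewrite /JJ /JJ' tr_block_mx !trmx0 trmx1 linearN /= trmx1. Qed.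

Lemma sE (X : 'M[F]_(k + k)) : sympl_inv X = JJ' *m X^T *m JJ.
Proof.
rewrite /sympl_inv.
have -> : X^T = (block_mx (ulsubmx X) (ursubmx X) (dlsubmx X) (drsubmx X))^T by rewrite submxK.
rewrite tr_block_mx /JJ /JJ' !mulmx_block.
rewrite ?mul0mx ?mulmx0 ?mulmx1 ?mulNmx ?mul1mx ?add0r ?addr0 ?mulmxN ?mulmx1.
by rewrite opprK.
Qed.

Lemma sM (X Y : 'M[F]_(k + k)) : sympl_inv (X *m Y) = sympl_inv Y *m sympl_inv X.
Proof.
rewrite !sE trmx_mul -!mulmxA; congr (_ *m _).
by rewrite !mulmxA -(mulmxA _ JJ JJ') JJJJ' mulmx1.
Qed.

Lemma s1 : sympl_inv (1%:M : 'M[F]_(k + k)) = 1%:M.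
Proof. by rewrite sE trmx1 mulmx1 JJ'JJ. Qed.

Lemma sN (X : 'M[F]_(k + k)) : sympl_inv (- X) = - sympl_inv X.
Proof. by rewrite !sE linearN /= mulmxN mulNmx. Qed.

End Aux.

Theorem mainTheorem13 (F : fieldType) :
  (forall (n : nat) (u : 'M[F]_n), u \in unitmx ->
     conj_stable (sym_elt (@trmx F n n)) u ->
     conj_stable (skew_elt (@trmx F n n)) u)
  /\
  (forall (k : nat) (u : 'M[F]_(k + k)), u \in unitmx ->
     conj_stable (skew_elt (@sympl_inv F k)) u ->
     conj_stable (sym_elt (@sympl_inv F k)) u).
Proof.
split.
  move=> n u uU H a Ha.
  have Hvu := mulVmx uU; have Huv := mulmxV uU.
  have Htt : u^T *m (invmx u)^T = 1%:M by rewrite -trmx_mul Hvu trmx1.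
  have Ht't : (invmx u)^T *m u^T = 1%:M by rewrite -trmx_mul Huv trmx1.
  have trE : forall b : 'M[F]_n, (invmx u *m b *m u)^T = u^T *m b^T *m (invmx u)^T.
    by move=> b; rewrite !trmx_mul mulmxA.
  have Hc : forall b, u *m u^T *m b = b *m (u *m u^T).
    apply: comm_sym_all => S HS.
    apply/(@key_lem _ _ _ _ _ _ _ Hvu Huv Htt Ht't).
    by rewrite -{1}HS -trE; exact: (H S HS).
  rewrite /skew_elt trE Ha mulmxN mulNmx; congr (- _).
  by apply/(@key_lem _ _ _ _ _ _ _ Hvu Huv Htt Ht't).
move=> k u uU H a Ha.
set v := invmx u.
have Hvu := mulVmx uU; have Huv := mulmxV uU.
set t := sympl_inv u; set t' := sympl_inv v.
have Htt : t *m t' = 1%:M by rewrite /t /t' -sM Hvu s1.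
have Ht't : t' *m t = 1%:M by rewrite /t /t' -sM Huv s1.
have sE3 : forall b, sympl_inv (v *m b *m u) = t *m sympl_inv b *m t'.
  by move=> b; rewrite !sM mulmxA.
have Hsk : forall b, sympl_inv b = - b -> u *m t *m b = b *m (u *m t).
  move=> b Hb; apply/(@key_lem _ _ _ _ _ _ _ Hvu Huv Htt Ht't).
  apply: oppr_inj; rewrite -(H b Hb) sE3 Hb mulmxN mulNmx //.
have HJS : forall S : 'M[F]_(k + k), S^T = S -> sympl_inv (JJ' F k *m S) = - (JJ' F k *m S).
  move=> S HS; rewrite sE trmx_mul HS trJJ' -!mulmxA JJJJ mulmxN mulmx1.
  by rewrite mulmxN.
have HJ' := Hsk _ (HJS 1%:M (trmx1 _ _)); rewrite mulmx1 in HJ'.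
have Hc : forall b, u *m t *m b = b *m (u *m t).
  apply: comm_sym_all => S HS.
  have := Hsk _ (HJS S HS).
  rewrite [u *m t *m (_ *m S)]mulmxA HJ' -!mulmxA => /(congr1 (mulmx (JJ F k))).
  by rewrite !mulmxA JJJJ' !mul1mx.
rewrite /sym_elt sE3 Ha.
by apply/(@key_lem _ _ _ _ _ _ _ Hvu Huv Htt Ht't).
Qed.
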